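(* In the setting described in the context, write $c=\hat u_1\cdot\hat e_1$ and $s=\hat u_3\cdot\hat e_1$, and consider the conditions (EC1) $\lambda_1\sqrt{\lambda_3^2-1}\,s=-\lambda_3\sqrt{1-\lambda_1^2}\,c$; (EC2) $\lambda_1\sqrt{\lambda_3^2-1}\,c=-\lambda_3\sqrt{1-\lambda_1^2}\,s$; (EC3) $\sqrt{1-\lambda_1^2}\,s=-\sqrt{\lambda_3^2-1}\,c$; (EC4) $\sqrt{1-\lambda_1^2}\,c=-\sqrt{\lambda_3^2-1}\,s$. Then: if the red triple is a triple cluster of the first kind, (EC1) holds; if the green triple is a triple cluster of the first kind, (EC2) holds; if the red triple is a triple cluster of the second kind, (EC3) holds; if the green triple is a triple cluster of the second kind, (EC4) holds. In particular, if a triple cluster (red or green, of either kind) exists, at least one of (EC1)–(EC4) holds.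
   Context: Setting: Let $U$ be a real symmetric positive-definite $3\times3$ matrix with eigenvalues $0<\lambda_1<\lambda_2=1<\lambda_3$ and orthonormal eigenvectors $\hat u_1,\hat u_2,\hat u_3$. Let $\hat e_1,\hat e_2$ be orthonormal vectors orthogonal to $\hat u_2$, oriented so that $\hat u_1\cdot\hat e_1=\hat u_3\cdot\hat e_2$ and $\hat u_3\cdot\hat e_1=-\hat u_1\cdot\hat e_2$, and such that $V:=(-I+2\hat e_1\otimes\hat e_1)U(-I+2\hat e_1\otimes\hat e_1)=(-I+2\hat e_2\otimes\hat e_2)U(-I+2\hat e_2\otimes\hat e_2)$ satisfies $V\neq U$ ($U,V$ form compound domains with symmetry axes $\hat e_1,\hat e_2$). Austenite connections: for $\kappa=\pm1$ let $R_\kappa\in SO(3)$, $b_\kappa$, $\hat m_\kappa$ be the two solutions of $R_\kappa U-I=b_\kappa\otimes\hat m_\kappa$, given by $b_\kappa=\frac{\rho}{\sqrt{\lambda_3^2-\lambda_1^2}}(\lambda_3\sqrt{1-\lambda_1^2}\,\hat u_1+\kappa\lambda_1\sqrt{\lambda_3^2-1}\,\hat u_3)$, $\hat m_\kappa=\frac{\lambda_3-\lambda_1}{\rho\sqrt{\lambda_3^2-\lambda_1^2}}(-\sqrt{1-\lambda_1^2}\,\hat u_1+\kappa\sqrt{\lambda_3^2-1}\,\hat u_3)$ with $\rho\neq0$ normalizing $\hat m_\kappa$. Equivalently $U-R_\kappa^T=(R_\kappa^Tb_\kappa)\otimes\hat m_\kappa$. Twin connections (known): there are $Q^{(1)},Q^{(2)}\in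 SO(3)$ and nonzero scalars $\zeta,\eta$ with $Q^{(1)}V-U=\zeta\,U\hat e_2\otimes\hat e_1$ and $Q^{(2)}V-U=\eta\,U\hat e_1\otimes\hat e_2$. Triple clusters: the red triple is $(U,Q^{(1)}V,R_{+}^T)$ and the green triple is $(U,Q^{(2)}V,R_{-}^T)$. The red triple is a triple cluster of the first kind if $R_+^Tb_+\parallel U\hat e_2$ (all pairwise differences are then rank-one with parallel shear vectors), and of the second kind if $\hat m_+\parallel\hat e_1$ (all pairwise differences are then rank-one with a common normal). The green triple is of the first kind if $R_-^Tb_-\parallel U\hat e_1$, and of the second kind if $\hat m_-\parallel\hat e_2$. *)

(* Defs.v *)
From HB Require Import structures.
From mathcomp Require Import all_boot all_order all_algebra.
Set Implicit Arguments. Unset Strict Implicit. Unset Printing Implicit Defensive.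
Import Order.TTheory GRing.Theory Num.Theory.
Local Open Scope ring_scope.

Section Defs.
Variable R : rcfType.
Local Notation vec := 'cV[R]_3.
Local Notation mat := 'M[R]_3.

Definition dotv (u v : vec) : R := (u^T *m v) 0 0.

Definition tens (a b : vec) : mat := a *m b^T.

Definition parallel (a b : vec) : Prop :=
  exists k : R, a = k *: b \/ b = k *: a.

Definition is_rotation (Q : mat) : Prop := Q^T *m Q = 1%:M /\ \det Q = 1.

Definition rot180 (e : vec) : mat := - 1%:M + 2%:R *: tens e e.

(* b_kappa and m_kappa of the austenite connections (kappa = 1 or -1) *)
Definition bvec (l1 l3 rho kappa : R) (u1 u3 : vec) : vec :=
  (rho / Num.sqrt (l3 ^+ 2 - l1 ^+ 2)) *:
    ((l3 * Num.sqrt (1 - l1 ^+ 2)) *: u1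
     + (kappa * l1 * Num.sqrt (l3 ^+ 2 - 1)) *: u3).

Definition mvec (l1 l3 rho kappa : R) (u1 u3 : vec) : vec :=
  ((l3 - l1) / (rho * Num.sqrt (l3 ^+ 2 - l1 ^+ 2))) *:
    ((- Num.sqrt (1 - l1 ^+ 2)) *: u1
     + (kappa * Num.sqrt (l3 ^+ 2 - 1)) *: u3).

End Defs.

(* Main.v *)
Require Import Defs.
From HB Require Import structures.
From mathcomp Require Import all_boot all_order all_algebra.
From mathcomp Require Import ring lra.
Import Order.TTheory GRing.Theory Num.Theory.
Local Open Scope ring_scope.

Set Implicit Arguments.
Section Helpers.
Variable R : rcfType.
Implicit Types (u v w x y b m : 'cV[R]_3).

Lemma dotvC u v : dotv u v = dotv v u.
Proof. rewrite /dotv !mxE; apply: eq_bigr => i _; by rewrite !mxE mulrC. Qed.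
Lemma dotvDr u v w : dotv u (v + w) = dotv u v + dotv u w.
Proof. by rewrite /dotv mulmxDr mxE. Qed.
Lemma dotvZr u v (k : R) : dotv u (k *: v) = k * dotv u v.
Proof. by rewrite /dotv -scalemxAr mxE. Qed.
Lemma dotvDl u v w : dotv (v + w) u = dotv v u + dotv w u.
Proof. by rewrite dotvC dotvDr !(dotvC u). Qed.
Lemma dotvZl u v (k : R) : dotv (k *: v) u = k * dotv v u.
Proof. by rewrite dotvC dotvZr dotvC. Qed.
Lemma dotv0l u : dotv 0 u = 0.
Proof. by rewrite /dotv trmx0 mul0mx mxE. Qed.
Lemma dotv_mull (A : 'M[R]_3) x y : dotv (A *m x) y = dotv x (A^T *m y).
Proof. by rewrite /dotv trmx_mul mulmxA. Qed.
Lemma colmx1 b (M : 'M[R]_1) : b *m M = M 0 0 *: b.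
Proof. apply/matrixP=> i j; rewrite !mxE big_ord1 (ord1 j) mulrC. done. Qed.

Lemma keyid (P U : 'M[R]_3) b m x : P *m U - 1%:M = tens b m ->
  dotv (P^T *m b) (U *m x) = dotv b b * dotv m x + dotv b x.
Proof.
move=> H; have HP : P *m U = tens b m + 1%:M by rewrite -H subrK.
rewrite dotv_mull trmxK mulmxA HP mulmxDl mul1mx /tens -mulmxA colmx1.
by rewrite dotvDr dotvZr mulrC.
Qed.

Variables (u1 u3 : 'cV[R]_3).
Hypotheses (h11 : dotv u1 u1 = 1) (h33 : dotv u3 u3 = 1) (h13 : dotv u1 u3 = 0).

Lemma dcomb (a1 a3 b1 b3 : R) :
  dotv (a1 *: u1 + a3 *: u3) (b1 *: u1 + b3 *: u3) = a1 * b1 + a3 * b3.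
Proof.
rewrite !(dotvDl, dotvDr, dotvZl, dotvZr) h11 h33 h13 (dotvC u3) h13.
by apply: subr0_eq; ring.
Qed.
Lemma dcomb1 (a1 a3 : R) : dotv (a1 *: u1 + a3 *: u3) u1 = a1.
Proof. by rewrite !(dotvDl, dotvZl) h11 (dotvC u3) h13 mulr1 mulr0 addr0. Qed.
Lemma dcomb3 (a1 a3 : R) : dotv (a1 *: u1 + a3 *: u3) u3 = a3.
Proof. by rewrite !(dotvDl, dotvZl) h33 h13 mulr1 mulr0 add0r. Qed.
Lemma mulU (U : 'M[R]_3) (l1 l3 a1 a3 : R) : U *m u1 = l1 *: u1 -> U *m u3 = l3 *: u3 ->
  U *m (a1 *: u1 + a3 *: u3) = (a1 * l1) *: u1 + (a3 * l3) *: u3.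
Proof. by move=> H1 H3; rewrite mulmxDr -!scalemxAr H1 H3 !scalerA. Qed.
End Helpers.

Lemma bvecE (R : rcfType) (l1 l3 rho kap : R) (u1 u3 : 'cV[R]_3) :
  bvec l1 l3 rho kap u1 u3 = (rho / Num.sqrt (l3 ^+ 2 - l1 ^+ 2)) *:
    ((l3 * Num.sqrt (1 - l1 ^+ 2)) *: u1
     + (kap * l1 * Num.sqrt (l3 ^+ 2 - 1)) *: u3).
Proof. by []. Qed.
Lemma mvecE (R : rcfType) (l1 l3 rho kap : R) (u1 u3 : 'cV[R]_3) :
  mvec l1 l3 rho kap u1 u3 = ((l3 - l1) / (rho * Num.sqrt (l3 ^+ 2 - l1 ^+ 2))) *:
    ((- Num.sqrt (1 - l1 ^+ 2)) *: u1
     + (kap * Num.sqrt (l3 ^+ 2 - 1)) *: u3).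
Proof. by []. Qed.

Unset Implicit Arguments.
Local Notation SA l1 := (Num.sqrt (1 - l1 ^+ 2)).
Local Notation SB l3 := (Num.sqrt (l3 ^+ 2 - 1)).
Local Notation SD l1 l3 := (Num.sqrt (l3 ^+ 2 - l1 ^+ 2)).

Theorem mainTheorem6 (R : rcfType)
  (U : 'M[R]_3) (l1 l3 : R) (u1 u2 u3 e1 e2 : 'cV[R]_3)
  (rho zeta eta : R) (Rp Rm Q1 Q2 : 'M[R]_3) :
  (* U symmetric positive definite with eigenvalues l1 < 1 < l3 *)
  U^T = U ->
  0 < l1 -> l1 < 1 -> 1 < l3 ->
  (* orthonormal eigenvectors *)
  dotv u1 u1 = 1 -> dotv u2 u2 = 1 -> dotv u3 u3 = 1 ->
  dotv u1 u2 = 0 -> dotv u1 u3 = 0 -> dotv u2 u3 = 0 ->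
  U *m u1 = l1 *: u1 -> U *m u2 = u2 -> U *m u3 = l3 *: u3 ->
  (* e1, e2 orthonormal, orthogonal to u2, oriented *)
  dotv e1 e1 = 1 -> dotv e2 e2 = 1 -> dotv e1 e2 = 0 ->
  dotv e1 u2 = 0 -> dotv e2 u2 = 0 ->
  dotv u1 e1 = dotv u3 e2 -> dotv u3 e1 = - dotv u1 e2 ->
  (* compound domains U, V *)
  rot180 e1 *m U *m rot180 e1 = rot180 e2 *m U *m rot180 e2 ->
  rot180 e1 *m U *m rot180 e1 <> U ->
  (* austenite connections, kappa = +1 (Rp) and kappa = -1 (Rm) *)
  rho != 0 ->
  dotv (mvec l1 l3 rho 1 u1 u3) (mvec l1 l3 rho 1 u1 u3) = 1 ->
  dotv (mvec l1 l3 rho (-1) u1 u3) (mvec l1 l3 rho (-1) u1 u3) = 1 ->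
  is_rotation Rp -> is_rotation Rm ->
  Rp *m U - 1%:M = tens (bvec l1 l3 rho 1 u1 u3) (mvec l1 l3 rho 1 u1 u3) ->
  Rm *m U - 1%:M = tens (bvec l1 l3 rho (-1) u1 u3) (mvec l1 l3 rho (-1) u1 u3) ->
  (* twin connections *)
  is_rotation Q1 -> is_rotation Q2 -> zeta != 0 -> eta != 0 ->
  Q1 *m (rot180 e1 *m U *m rot180 e1) - U = zeta *: tens (U *m e2) e1 ->
  Q2 *m (rot180 e1 *m U *m rot180 e1) - U = eta *: tens (U *m e1) e2 ->
  let c := dotv u1 e1 in
  let s := dotv u3 e1 in
  let EC1 := l1 * Num.sqrt (l3 ^+ 2 - 1) * s = - (l3 * Num.sqrt (1 - l1 ^+ 2) * c) in
  let EC2 := l1 * Num.sqrt (l3 ^+ 2 - 1) * c = - (l3 * Num.sqrt (1 - l1 ^+ 2) * s) in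
  let EC3 := Num.sqrt (1 - l1 ^+ 2) * s = - (Num.sqrt (l3 ^+ 2 - 1) * c) in
  let EC4 := Num.sqrt (1 - l1 ^+ 2) * c = - (Num.sqrt (l3 ^+ 2 - 1) * s) in
  let red_first := parallel (Rp^T *m bvec l1 l3 rho 1 u1 u3) (U *m e2) in
  let green_first := parallel (Rm^T *m bvec l1 l3 rho (-1) u1 u3) (U *m e1) in
  let red_second := parallel (mvec l1 l3 rho 1 u1 u3) e1 in
  let green_second := parallel (mvec l1 l3 rho (-1) u1 u3) e2 in
  (red_first -> EC1) /\ (green_first -> EC2) /\
  (red_second -> EC3) /\ (green_second -> EC4) /\
  (red_first \/ green_first \/ red_second \/ green_second ->
     EC1 \/ EC2 \/ EC3 \/ EC4).
Proof.
move=> hUs hl1 hl1' hl3 h11 h22 h33 h12 h13 h23 hU1 hU2 hU3 he11 he22 he12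
  he1u2 he2u2 hor1 hor2 hV hVU hrho hmp hmm hRp hRm hRpU hRmU hQ1 hQ2 hz he
  hQ1V hQ2V.
have hA0 : 0 < 1 - l1 ^+ 2 by rewrite subr_gt0; nra.
have hB0 : 0 < l3 ^+ 2 - 1 by rewrite subr_gt0; nra.
have hD0 : 0 < l3 ^+ 2 - l1 ^+ 2 by rewrite subr_gt0; nra.
have hDn : l3 ^+ 2 - l1 ^+ 2 != 0 by rewrite gt_eqF.
have hA : (SA l1) != 0 by rewrite gt_eqF // sqrtr_gt0.
have hB : (SB l3) != 0 by rewrite gt_eqF // sqrtr_gt0.
have hD : (SD l1 l3) != 0 by rewrite gt_eqF // sqrtr_gt0.
have hDD : (SD l1 l3) ^+ 2 = l3 ^+ 2 - l1 ^+ 2 by rewrite sqr_sqrtr // ltW.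
have hAA : (SA l1) ^+ 2 = 1 - l1 ^+ 2 by rewrite sqr_sqrtr // ltW.
have hBB : (SB l3) ^+ 2 = l3 ^+ 2 - 1 by rewrite sqr_sqrtr // ltW.
have hl1n : l1 != 0 by rewrite gt_eqF.
have hl3n : l3 != 0 by rewrite gt_eqF // (lt_trans _ hl3).
have hl13 : l1 + l3 != 0 by rewrite gt_eqF //; lra.
have h31 : dotv u3 u1 = 0 by rewrite dotvC.
have hu1e2 : dotv e2 u1 = - dotv u3 e1 by rewrite dotvC hor2 opprK.
have hu3e2 : dotv e2 u3 = dotv u1 e1 by rewrite dotvC hor1.
have hbb : forall kap, kap ^+ 2 = 1 ->
    dotv (bvec l1 l3 rho kap u1 u3) (bvec l1 l3 rho kap u1 u3) = rho ^+ 2.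
  move=> kap hk; rewrite bvecE dotvZl dotvZr dcomb //.
  transitivity ((rho / (SD l1 l3)) ^+ 2 * (l3 ^+ 2 * (SA l1) ^+ 2 + kap ^+ 2 * l1 ^+ 2 * (SB l3) ^+ 2)).
    by apply: subr0_eq; field; rewrite ?hD ?hrho ?hl1n ?hl3n ?hl13 ?hDn ?hA ?hB //.
  rewrite hk hAA hBB; transitivity (rho ^+ 2 * (l3 ^+ 2 - l1 ^+ 2) / (SD l1 l3) ^+ 2).
    by apply: subr0_eq; field; rewrite ?hD ?hrho ?hl1n ?hl3n ?hl13 ?hDn ?hA ?hB //.
  by rewrite hDD; apply: subr0_eq; field; rewrite ?hD ?hrho ?hl1n ?hl3n ?hl13 ?hDn ?hA ?hB //.
have wnz : forall (P : 'M[R]_3) kap, kap ^+ 2 = 1 ->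
    P *m U - 1%:M = tens (bvec l1 l3 rho kap u1 u3) (mvec l1 l3 rho kap u1 u3) ->
    P^T *m bvec l1 l3 rho kap u1 u3 != 0.
  move=> P kap hk HP; apply/eqP => H0.
  have := @keyid _ _ _ _ _ u1 HP.
  rewrite H0 dotv0l hbb // mvecE bvecE dotvZl (dcomb1 _ _ _ h11 h13) dotvZl (dcomb1 _ _ _ h11 h13) => h.
  have : rho * (SA l1) * l1 / (SD l1 l3) = 0.
    rewrite h. apply: subr0_eq. field; rewrite ?hD ?hrho ?hl1n ?hl3n ?hl13 ?hDn ?hA ?hB //.
  by move/eqP; rewrite !mulf_eq0 invr_eq0 (negbTE hrho) (negbTE hA) (negbTE hl1n) (negbTE hD).
have hn1 : (-1 : R) ^+ 2 = 1 by rewrite sqrrN expr1n.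
have hv1 : dotv u1 e2 = - dotv u3 e1 by rewrite hor2 opprK.
have d1 := dcomb1 _ _ _ h11 h13.
have d3 := dcomb3 _ _ _ h33 h13.
have dc := dcomb _ _ _ h11 h33 h13.
have RS : parallel (mvec l1 l3 rho 1 u1 u3) e1 ->
    SA l1 * dotv u3 e1 = - (SB l3 * dotv u1 e1).
  case=> k [Hm|Hm].
  - have h1 := congr1 (dotv u1) Hm; have h3 := congr1 (dotv u3) Hm.
    rewrite mvecE !dotvZr (dotvC _ u1 (_ + _)) d1 in h1.
    rewrite mvecE !dotvZr (dotvC _ u3 (_ + _)) d3 in h3.
    have kn : k != 0.
      apply/eqP => k0; move: hmp; rewrite Hm k0 scale0r dotv0l => /eqP.
      by rewrite eq_sym oner_eq0.
    have e : k * (SA l1 * dotv u3 e1 + SB l3 * dotv u1 e1) = 0.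
      transitivity (SA l1 * (k * dotv u3 e1) + SB l3 * (k * dotv u1 e1)).
        by apply: subr0_eq; ring.
      by rewrite -h1 -h3; apply: subr0_eq; ring.
    by move/eqP: e; rewrite mulf_eq0 (negbTE kn) /= addr_eq0 => /eqP.
  - have h1 := congr1 (dotv u1) Hm; have h3 := congr1 (dotv u3) Hm.
    rewrite mvecE !dotvZr (dotvC _ u1 (_ + _)) d1 in h1.
    rewrite mvecE !dotvZr (dotvC _ u3 (_ + _)) d3 in h3.
    by rewrite h1 h3; apply: subr0_eq; ring.
have GS : parallel (mvec l1 l3 rho (-1) u1 u3) e2 ->
    SA l1 * dotv u1 e1 = - (SB l3 * dotv u3 e1).
  case=> k [Hm|Hm].
  - have h1 := congr1 (dotv u1) Hm; have h3 := congr1 (dotv u3) Hm.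
    rewrite mvecE !dotvZr (dotvC _ u1 (_ + _)) d1 in h1.
    rewrite mvecE !dotvZr (dotvC _ u3 (_ + _)) d3 in h3.
    have kn : k != 0.
      apply/eqP => k0; move: hmm; rewrite Hm k0 scale0r dotv0l => /eqP.
      by rewrite eq_sym oner_eq0.
    have e : k * (SA l1 * dotv u1 e1 + SB l3 * dotv u3 e1) = 0.
      transitivity (SA l1 * (k * dotv u3 e2) - SB l3 * (k * dotv u1 e2)).
        by rewrite -hor1 hv1; apply: subr0_eq; ring.
      by rewrite -h1 -h3; apply: subr0_eq; ring.
    by move/eqP: e; rewrite mulf_eq0 (negbTE kn) /= addr_eq0 => /eqP.
  - have h1 := congr1 (dotv u1) Hm; have h3 := congr1 (dotv u3) Hm.
    rewrite mvecE !dotvZr (dotvC _ u1 (_ + _)) d1 in h1.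
    rewrite mvecE !dotvZr (dotvC _ u3 (_ + _)) d3 in h3.
    by rewrite hor1 hor2 h1 h3; apply: subr0_eq; ring.
have RF : parallel (Rp^T *m bvec l1 l3 rho 1 u1 u3) (U *m e2) ->
    l1 * SB l3 * dotv u3 e1 = - (l3 * SA l1 * dotv u1 e1).
  pose y := (- SB l3 / l1) *: u1 + (SA l1 / l3) *: u3.
  have hwy : dotv (Rp^T *m bvec l1 l3 rho 1 u1 u3) (U *m y) = 0.
    rewrite (keyid y hRpU) (hbb _ (expr1n _ _)) mvecE bvecE /y !dotvZl !dc.
    by apply: subr0_eq; field; rewrite ?hD ?hrho ?hl1n ?hl3n ?hl13 ?hDn ?hA ?hB //.
  have hUe : dotv (U *m e2) (U *m y) =
      l1 * SB l3 * dotv u3 e1 + l3 * SA l1 * dotv u1 e1.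
    rewrite dotv_mull hUs /y (mulU _ _ hU1 hU3) (mulU _ _ hU1 hU3) dotvDr !dotvZr.
    by rewrite hu1e2 hu3e2; apply: subr0_eq; field; rewrite ?hD ?hrho ?hl1n ?hl3n ?hl13 ?hDn ?hA ?hB //.
  case=> k [Hw|Hw].
  - have kn : k != 0.
      apply/eqP => k0; move: (wnz Rp 1 (expr1n _ _) hRpU).
      by rewrite Hw k0 scale0r eqxx.
    move: hwy; rewrite Hw dotvZl hUe => /eqP.
    by rewrite mulf_eq0 (negbTE kn) /= addr_eq0 => /eqP.
  - move: hUe; rewrite Hw dotvZl hwy mulr0 => /esym/eqP.
    by rewrite addr_eq0 => /eqP.
have GF : parallel (Rm^T *m bvec l1 l3 rho (-1) u1 u3) (U *m e1) ->
    l1 * SB l3 * dotv u1 e1 = - (l3 * SA l1 * dotv u3 e1).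
  pose y := (SB l3 / l1) *: u1 + (SA l1 / l3) *: u3.
  have hwy : dotv (Rm^T *m bvec l1 l3 rho (-1) u1 u3) (U *m y) = 0.
    rewrite (keyid y hRmU) (hbb _ hn1) mvecE bvecE /y !dotvZl !dc.
    by apply: subr0_eq; field; rewrite ?hD ?hrho ?hl1n ?hl3n ?hl13 ?hDn ?hA ?hB //.
  have hUe : dotv (U *m e1) (U *m y) =
      l1 * SB l3 * dotv u1 e1 + l3 * SA l1 * dotv u3 e1.
    rewrite dotv_mull hUs /y (mulU _ _ hU1 hU3) (mulU _ _ hU1 hU3) dotvDr !dotvZr.
    by rewrite (dotvC _ e1 u1) (dotvC _ e1 u3); apply: subr0_eq; field; rewrite ?hD ?hrho ?hl1n ?hl3n ?hl13 ?hDn ?hA ?hB //.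
  case=> k [Hw|Hw].
  - have kn : k != 0.
      apply/eqP => k0; move: (wnz Rm (-1) hn1 hRmU).
      by rewrite Hw k0 scale0r eqxx.
    move: hwy; rewrite Hw dotvZl hUe => /eqP.
    by rewrite mulf_eq0 (negbTE kn) /= addr_eq0 => /eqP.
  - move: hUe; rewrite Hw dotvZl hwy mulr0 => /esym/eqP.
    by rewrite addr_eq0 => /eqP.
cbv zeta.
split; first exact: RF.
split; first exact: GF.
split; first exact: RS.
split; first exact: GS.
case=> [/RF|[/GF|[/RS|/GS]]] h; tauto.
Qed.
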